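(* Let $a,b,c$ be pairwise distinct positive real numbers, and let $D_1,D_2$ be the $6\times 6$ symmetric matrices given in the context. Let $\mathbf v=(1,1,1,1,1,1)^T$. Then $$\langle D_1^{-1}\mathbf v,\mathbf v\rangle\neq\langle D_2^{-1}\mathbf v,\mathbf v\rangle.$$
   Context: The matrix $D_1$ is $$D_1=\begin{pmatrix} a+c&0&0&-c/2&0&0\\ 0&a+b&0&0&-a/2&0\\ 0&0&b+c&0&0&-b/2\\ -c/2&0&0&b+c&-c/2&-b/2\\ 0&-a/2&0&-c/2&a+c&-a/2\\ 0&0&-b/2&-b/2&-a/2&a+b\end{pmatrix},$$ and $D_2$ is obtained from $D_1$ by interchanging $b$ and $c$ in every entry. These are the weighted Laplacians of the weighted combinatorial graph analogs of the $7_1$ Buser–Conway–Doyle–Semmler pair; the quantity $\langle D^{-1}\mathbf v,\mathbf v\rangle$ is their (combinatorial) torsional rigidity. *)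

(* Defs.v *)
From HB Require Import structures.
From mathcomp Require Import all_boot all_order all_algebra.
Set Implicit Arguments. Unset Strict Implicit. Unset Printing Implicit Defensive.
Import Order.TTheory GRing.Theory Num.Theory.
Local Open Scope ring_scope.

(* Row-major list of entries of D_1 (indices 0..5 correspond to 1..6). *)
Definition D1_entries {R : fieldType} (a b c : R) : seq (seq R) :=
  [:: [:: a + c; 0; 0; - (c / 2); 0; 0];
      [:: 0; a + b; 0; 0; - (a / 2); 0];
      [:: 0; 0; b + c; 0; 0; - (b / 2)];
      [:: - (c / 2); 0; 0; b + c; - (c / 2); - (b / 2)];
      [:: 0; - (a / 2); 0; - (c / 2); a + c; - (a / 2)];
      [:: 0; 0; - (b / 2); - (b / 2); - (a / 2); a + b]].

Definition D1 {R : fieldType} (a b c : R) : 'M[R]_6 :=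
  \matrix_(i < 6, j < 6) nth 0 (nth [::] (D1_entries a b c) i) j.

Definition D2 {R : fieldType} (a b c : R) : 'M[R]_6 := D1 a c b.

Definition vones {R : fieldType} : 'cV[R]_6 := const_mx 1.

Definition torsion {R : fieldType} (D : 'M[R]_6) : R :=
  ((vones^T *m invmx D *m vones) 0 0).

(* Main.v *)
Require Import Defs.
From HB Require Import structures.
From mathcomp Require Import all_boot all_order all_algebra.
From mathcomp Require Import ring lra.
Import Order.TTheory GRing.Theory Num.Theory.
Local Open Scope ring_scope.

Notation o0 := (@Ordinal 6 0 isT).
Notation o1 := (@Ordinal 6 1 isT).
Notation o2 := (@Ordinal 6 2 isT).
Notation o3 := (@Ordinal 6 3 isT).
Notation o4 := (@Ordinal 6 4 isT).
Notation o5 := (@Ordinal 6 5 isT).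

Lemma sum6 (R : nmodType) (F : 'I_6 -> R) :
  \sum_(i < 6) F i = F o0 + F o1 + F o2 + F o3 + F o4 + F o5.
Proof.
rewrite !big_ord_recr big_ord0 /= add0r.
by repeat (congr (_ + _); first try congr (_ + _)); congr F; apply: val_inj.
Qed.

Lemma qf (R : realFieldType) (a b c y0 y1 y2 y3 y4 y5 : R) :
  0 < a -> 0 < b -> 0 < c ->
  y0 * (a + c) + y1 * 0 + y2 * 0 + y3 * - (c / 2) + y4 * 0 + y5 * 0 = 0 ->
  y0 * 0 + y1 * (a + b) + y2 * 0 + y3 * 0 + y4 * - (a / 2) + y5 * 0 = 0 ->
  y0 * 0 + y1 * 0 + y2 * (b + c) + y3 * 0 + y4 * 0 + y5 * - (b / 2) = 0 ->
  y0 * - (c / 2) + y1 * 0 + y2 * 0 + y3 * (b + c) + y4 * - (c / 2) + y5 * - (b / 2) = 0 ->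
  y0 * 0 + y1 * - (a / 2) + y2 * 0 + y3 * - (c / 2) + y4 * (a + c) + y5 * - (a / 2) = 0 ->
  y0 * 0 + y1 * 0 + y2 * - (b / 2) + y3 * - (b / 2) + y4 * - (a / 2) + y5 * (a + b) = 0 ->
  y0 = 0 /\ y1 = 0 /\ y2 = 0 /\ y3 = 0 /\ y4 = 0 /\ y5 = 0.
Proof.
move=> a0 b0 c0 e0 e1 e2 e3 e4 e5.
have Q : (a + c/2) * y0^+2 + (a/2 + b) * y1^+2 + (b/2 + c) * y2^+2
   + b/2 * y3^+2 + c/2 * y4^+2 + a/2 * y5^+2
   + (c/2 * (y0-y3)^+2 + a/2 * (y1-y4)^+2 + b/2*(y2-y5)^+2
   + c/2 * (y3-y4)^+2 + b/2*(y3-y5)^+2 + a/2*(y4-y5)^+2) = 0.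
  transitivity (y0 * (y0 * (a + c) + y1 * 0 + y2 * 0 + y3 * - (c / 2) + y4 * 0 + y5 * 0) + y1 * (y0 * 0 + y1 * (a + b) + y2 * 0 + y3 * 0 + y4 * - (a / 2) + y5 * 0) + y2 * (y0 * 0 + y1 * 0 + y2 * (b + c) + y3 * 0 + y4 * 0 + y5 * - (b / 2)) + y3 * (y0 * - (c / 2) + y1 * 0 + y2 * 0 + y3 * (b + c) + y4 * - (c / 2) + y5 * - (b / 2)) + y4 * (y0 * 0 + y1 * - (a / 2) + y2 * 0 + y3 * - (c / 2) + y4 * (a + c) + y5 * - (a / 2)) + y5 * (y0 * 0 + y1 * 0 + y2 * - (b / 2) + y3 * - (b / 2) + y4 * - (a / 2) + y5 * (a + b))); first by field; rewrite ?pnatr_eq0.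
  by rewrite e0 e1 e2 e3 e4 e5 !mulr0 !addr0.
have p (k y : R) : 0 < k -> 0 <= k * y ^+ 2 by move=> k0; apply: mulr_ge0; [exact: ltW | exact: sqr_ge0].
have h2 : (0:R) < 2 by [].
have z (k y : R) : 0 < k -> k * y ^+ 2 = 0 -> y = 0.
  by move=> k0 /eqP; rewrite mulf_eq0 sqrf_eq0 (gt_eqF k0) /= => /eqP.
have ka : 0 < a / 2 by rewrite divr_gt0.
have kb : 0 < b / 2 by rewrite divr_gt0.
have kc : 0 < c / 2 by rewrite divr_gt0.
have k0 : 0 < a + c / 2 by rewrite addr_gt0.
have k1 : 0 < a / 2 + b by rewrite addr_gt0.
have k2 : 0 < b / 2 + c by rewrite addr_gt0.
move: Q.
move: (p _ y0 k0) (p _ y1 k1) (p _ y2 k2) (p _ y3 kb) (p _ y4 kc) (p _ y5 ka).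
move: (p _ (y0-y3) kc) (p _ (y1-y4) ka) (p _ (y2-y5) kb) (p _ (y3-y4) kc) (p _ (y3-y5) kb) (p _ (y4-y5) ka).
move: (z _ y0 k0) (z _ y1 k1) (z _ y2 k2) (z _ y3 kb) (z _ y4 kc) (z _ y5 ka).
set t0 := (a + c/2) * y0^+2; set t1 := (a/2 + b) * y1^+2; set t2 := (b/2 + c) * y2^+2.
set t3 := b/2 * y3^+2; set t4 := c/2 * y4^+2; set t5 := a/2 * y5^+2.
set s0 := c/2 * (y0-y3)^+2; set s1 := a/2 * (y1-y4)^+2; set s2 := b/2*(y2-y5)^+2.
set s3 := c/2 * (y3-y4)^+2; set s4 := b/2*(y3-y5)^+2; set s5 := a/2*(y4-y5)^+2.
move=> z0 z1 z2 z3 z4 z5 *.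
split; [apply: z0|split; [apply: z1|split; [apply: z2|split; [apply: z3|split; [apply: z4|apply: z5]]]]]; lra.
Qed.

Lemma D1_unit (R : realFieldType) (a b c : R) :
  0 < a -> 0 < b -> 0 < c -> D1 a b c \in unitmx.
Proof.
move=> a0 b0 c0; rewrite unitmxE unitfE; apply/negP => /det0P [v vn0 vD].
have E j := congr1 (fun M : 'M[R]_(1,6) => M ord0 j) vD.
have e0 := E o0; have e1 := E o1; have e2 := E o2.
have e3 := E o3; have e4 := E o4; have e5 := E o5.
rewrite /= !mxE sum6 /= !mxE /= in e0.
rewrite /= !mxE sum6 /= !mxE /= in e1.
rewrite /= !mxE sum6 /= !mxE /= in e2.
rewrite /= !mxE sum6 /= !mxE /= in e3.
rewrite /= !mxE sum6 /= !mxE /= in e4.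
rewrite /= !mxE sum6 /= !mxE /= in e5.
have [z0 [z1 [z2 [z3 [z4 z5]]]]] := @qf _ a b c _ _ _ _ _ _ a0 b0 c0 e0 e1 e2 e3 e4 e5.
move/negP: vn0; apply; apply/eqP/rowP => -[j Hj]; rewrite [RHS]mxE.
case: j Hj => [|j] Hj; first by rewrite -[RHS]z0; congr (v _ _); apply: val_inj.
case: j Hj => [|j] Hj; first by rewrite -[RHS]z1; congr (v _ _); apply: val_inj.
case: j Hj => [|j] Hj; first by rewrite -[RHS]z2; congr (v _ _); apply: val_inj.
case: j Hj => [|j] Hj; first by rewrite -[RHS]z3; congr (v _ _); apply: val_inj.
case: j Hj => [|j] Hj; first by rewrite -[RHS]z4; congr (v _ _); apply: val_inj.
case: j Hj => [|j] Hj; first by rewrite -[RHS]z5; congr (v _ _); apply: val_inj.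
by [].
Qed.
Definition Pp {R : realFieldType} (a b c : R) : R := ((1/2)*b^+2*c^+4 + (9/8)*b^+3*c^+3 + (1/2)*b^+4*c^+2 + 1*a*b*c^+4 + (31/8)*a*b^+2*c^+3 + (31/8)*a*b^+3*c^+2 + 1*a*b^+4*c + (1/2)*a^+2*c^+4 + (31/8)*a^+2*b*c^+3 + (439/64)*a^+2*b^+2*c^+2 + (31/8)*a^+2*b^+3*c + (1/2)*a^+2*b^+4 + (9/8)*a^+3*c^+3 + (31/8)*a^+3*b*c^+2 + (31/8)*a^+3*b^+2*c + (9/8)*a^+3*b^+3 + (1/2)*a^+4*c^+2 + 1*a^+4*b*c + (1/2)*a^+4*b^+2).
Definition Np {R : realFieldType} (a b c : R) : R := (1*b*c^+4 + (85/8)*b^+2*c^+3 + (23/2)*b^+3*c^+2 + 1*b^+4*c + 1*a*c^+4 + (45/2)*a*b*c^+3 + (349/8)*a*b^+2*c^+2 + (45/2)*a*b^+3*c + 1*a*b^+4 + (23/2)*a^+2*c^+3 + (349/8)*a^+2*b*c^+2 + (349/8)*a^+2*b^+2*c + (85/8)*a^+2*b^+3 + (85/8)*a^+3*c^+2 + (45/2)*a^+3*b*c + (23/2)*a^+3*b^+2 + 1*a^+4*c + 1*a^+4*b).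
Definition w0 {R : realFieldType} (a b c : R) : R := ((7/4)*b^+2*c^+3 + (9/4)*b^+3*c^+2 + (1/2)*b^+4*c + (7/2)*a*b*c^+3 + (213/32)*a*b^+2*c^+2 + (29/8)*a*b^+3*c + (1/2)*a*b^+4 + (7/4)*a^+2*c^+3 + (83/16)*a^+2*b*c^+2 + (9/2)*a^+2*b^+2*c + (9/8)*a^+2*b^+3 + (3/4)*a^+3*c^+2 + (5/4)*a^+3*b*c + (1/2)*a^+3*b^+2).
Definition w1 {R : realFieldType} (a b c : R) : R := ((1/2)*b*c^+4 + (9/8)*b^+2*c^+3 + (1/2)*b^+3*c^+2 + (1/2)*a*c^+4 + (29/8)*a*b*c^+3 + (9/2)*a*b^+2*c^+2 + (5/4)*a*b^+3*c + (9/4)*a^+2*c^+3 + (213/32)*a^+2*b*c^+2 + (83/16)*a^+2*b^+2*c + (3/4)*a^+2*b^+3 + (7/4)*a^+3*c^+2 + (7/2)*a^+3*b*c + (7/4)*a^+3*b^+2).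
Definition w2 {R : realFieldType} (a b c : R) : R := ((3/4)*b^+2*c^+3 + (7/4)*b^+3*c^+2 + (5/4)*a*b*c^+3 + (83/16)*a*b^+2*c^+2 + (7/2)*a*b^+3*c + (1/2)*a^+2*c^+3 + (9/2)*a^+2*b*c^+2 + (213/32)*a^+2*b^+2*c + (7/4)*a^+2*b^+3 + (9/8)*a^+3*c^+2 + (29/8)*a^+3*b*c + (9/4)*a^+3*b^+2 + (1/2)*a^+4*c + (1/2)*a^+4*b).
Definition w3 {R : realFieldType} (a b c : R) : R := ((5/2)*b^+2*c^+3 + (9/4)*b^+3*c^+2 + 5*a*b*c^+3 + (145/16)*a*b^+2*c^+2 + 4*a*b^+3*c + (5/2)*a^+2*c^+3 + (77/8)*a^+2*b*c^+2 + (275/32)*a^+2*b^+2*c + (7/4)*a^+2*b^+3 + (11/4)*a^+3*c^+2 + (41/8)*a^+3*b*c + (9/4)*a^+3*b^+2 + (1/2)*a^+4*c + (1/2)*a^+4*b).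
Definition w4 {R : realFieldType} (a b c : R) : R := ((7/4)*b^+2*c^+3 + (9/4)*b^+3*c^+2 + (1/2)*b^+4*c + 4*a*b*c^+3 + (275/32)*a*b^+2*c^+2 + (41/8)*a*b^+3*c + (1/2)*a*b^+4 + (9/4)*a^+2*c^+3 + (145/16)*a^+2*b*c^+2 + (77/8)*a^+2*b^+2*c + (11/4)*a^+2*b^+3 + (5/2)*a^+3*c^+2 + 5*a^+3*b*c + (5/2)*a^+3*b^+2).
Definition w5 {R : realFieldType} (a b c : R) : R := ((1/2)*b*c^+4 + (11/4)*b^+2*c^+3 + (5/2)*b^+3*c^+2 + (1/2)*a*c^+4 + (41/8)*a*b*c^+3 + (77/8)*a*b^+2*c^+2 + 5*a*b^+3*c + (9/4)*a^+2*c^+3 + (275/32)*a^+2*b*c^+2 + (145/16)*a^+2*b^+2*c + (5/2)*a^+2*b^+3 + (7/4)*a^+3*c^+2 + 4*a^+3*b*c + (9/4)*a^+3*b^+2).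
Definition Qp {R : realFieldType} (a b c : R) : R := ((7/16)*b^+3*c^+5 + (63/64)*b^+4*c^+4 + (7/16)*b^+5*c^+3 + (21/16)*a*b^+2*c^+5 + (77/16)*a*b^+3*c^+4 + (77/16)*a*b^+4*c^+3 + (21/16)*a*b^+5*c^+2 + (21/16)*a^+2*b*c^+5 + (245/32)*a^+2*b^+2*c^+4 + (6545/512)*a^+2*b^+3*c^+3 + (245/32)*a^+2*b^+4*c^+2 + (21/16)*a^+2*b^+5*c + (7/16)*a^+3*c^+5 + (77/16)*a^+3*b*c^+4 + (6545/512)*a^+3*b^+2*c^+3 + (6545/512)*a^+3*b^+3*c^+2 + (77/16)*a^+3*b^+4*c + (7/16)*a^+3*b^+5 + (63/64)*a^+4*c^+4 + (77/16)*a^+4*b*c^+3 + (245/32)*a^+4*b^+2*c^+2 + (77/16)*a^+4*b^+3*c + (63/64)*a^+4*b^+4 + (7/16)*a^+5*c^+3 + (21/16)*a^+5*b*c^+2 + (21/16)*a^+5*b^+2*c + (7/16)*a^+5*b^+3).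

Lemma alg (R : realFieldType) (a b c X0 X1 X2 X3 X4 X5 : R) :
  (a + c) * X0 + 0 * X1 + 0 * X2 + - (c / 2) * X3 + 0 * X4 + 0 * X5 = 1 ->
  0 * X0 + (a + b) * X1 + 0 * X2 + 0 * X3 + - (a / 2) * X4 + 0 * X5 = 1 ->
  0 * X0 + 0 * X1 + (b + c) * X2 + 0 * X3 + 0 * X4 + - (b / 2) * X5 = 1 ->
  - (c / 2) * X0 + 0 * X1 + 0 * X2 + (b + c) * X3 + - (c / 2) * X4 + - (b / 2) * X5 = 1 ->
  0 * X0 + - (a / 2) * X1 + 0 * X2 + - (c / 2) * X3 + (a + c) * X4 + - (a / 2) * X5 = 1 ->
  0 * X0 + 0 * X1 + - (b / 2) * X2 + - (b / 2) * X3 + - (a / 2) * X4 + (a + b) * X5 = 1 ->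
  Pp a b c * (1 * X0 + 1 * X1 + 1 * X2 + 1 * X3 + 1 * X4 + 1 * X5) = Np a b c.
Proof.
move=> e0 e1 e2 e3 e4 e5.
have h : Pp a b c * (1 * X0 + 1 * X1 + 1 * X2 + 1 * X3 + 1 * X4 + 1 * X5) - Np a b c = w0 a b c * (((a + c) * X0 + 0 * X1 + 0 * X2 + - (c / 2) * X3 + 0 * X4 + 0 * X5) - 1) + w1 a b c * ((0 * X0 + (a + b) * X1 + 0 * X2 + 0 * X3 + - (a / 2) * X4 + 0 * X5) - 1) + w2 a b c * ((0 * X0 + 0 * X1 + (b + c) * X2 + 0 * X3 + 0 * X4 + - (b / 2) * X5) - 1) + w3 a b c * ((- (c / 2) * X0 + 0 * X1 + 0 * X2 + (b + c) * X3 + - (c / 2) * X4 + - (b / 2) * X5) - 1) + w4 a b c * ((0 * X0 + - (a / 2) * X1 + 0 * X2 + - (c / 2) * X3 + (a + c) * X4 + - (a / 2) * X5) - 1) + w5 a b c * ((0 * X0 + 0 * X1 + - (b / 2) * X2 + - (b / 2) * X3 + - (a / 2) * X4 + (a + b) * X5) - 1).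
  by rewrite /Pp /Np /w0 /w1 /w2 /w3 /w4 /w5; field; rewrite ?pnatr_eq0.
apply/eqP; rewrite -subr_eq0 h.
by rewrite e0 e1 e2 e3 e4 e5 !subrr !mulr0 !addr0.
Qed.

Lemma key (R : realFieldType) (a b c : R) :
  0 < a -> 0 < b -> 0 < c -> Pp a b c * torsion (D1 a b c) = Np a b c.
Proof.
move=> a0 b0 c0; have U := @D1_unit _ a b c a0 b0 c0.
have Hx : D1 a b c *m (invmx (D1 a b c) *m vones) = vones by rewrite mulKVmx.
rewrite /torsion -mulmxA.
move: (invmx (D1 a b c) *m vones) Hx => x Hx.
have E j := congr1 (fun M : 'M[R]_(6,1) => M j ord0) Hx.
have e0 := E o0; have e1 := E o1; have e2 := E o2.
have e3 := E o3; have e4 := E o4; have e5 := E o5.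
rewrite /= !mxE sum6 /= !mxE /= in e0.
rewrite /= !mxE sum6 /= !mxE /= in e1.
rewrite /= !mxE sum6 /= !mxE /= in e2.
rewrite /= !mxE sum6 /= !mxE /= in e3.
rewrite /= !mxE sum6 /= !mxE /= in e4.
rewrite /= !mxE sum6 /= !mxE /= in e5.
rewrite !mxE sum6 !mxE.
exact: (@alg _ a b c _ _ _ _ _ _ e0 e1 e2 e3 e4 e5).
Qed.

Lemma Qpos (R : realFieldType) (a b c : R) :
  0 < a -> 0 < b -> 0 < c -> 0 < Qp a b c.
Proof.
move=> a0 b0 c0; rewrite /Qp.
repeat apply: addr_gt0; repeat apply: mulr_gt0;
  by rewrite ?exprn_gt0 ?invr_gt0 ?ltr0n.
Qed.

Theorem mainTheorem4 (R : realFieldType) (a b c : R) :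
  0 < a -> 0 < b -> 0 < c -> a != b -> b != c -> a != c ->
  torsion (D1 a b c) != torsion (D2 a b c).
Proof.
move=> a0 b0 c0 ab bc ac; rewrite /D2.
have k1 := @key _ a b c a0 b0 c0.
have k2 := @key _ a c b a0 c0 b0.
apply/eqP => T.
have h : Np a b c * Pp a c b - Np a c b * Pp a b c = (a - b) * (b - c) * (a - c) * Qp a b c.
  by rewrite /Np /Pp /Qp; field; rewrite ?pnatr_eq0.
move: h; rewrite -k1 -k2 T.
have -> : Pp a b c * torsion (D1 a c b) * Pp a c b -
   Pp a c b * torsion (D1 a c b) * Pp a b c = 0 by ring.
move/eqP; rewrite eq_sym !mulf_eq0 !subr_eq0 (negbTE ab) (negbTE bc) (negbTE ac).
by rewrite (gt_eqF (@Qpos _ a b c a0 b0 c0)).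
Qed.
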